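(* Let $R_0^*\in SO(3)$ with unit quaternion representation $w_0^*\in\mathbb{S}^3$, let $x_1,\dots,x_\ell\in\mathbb{R}^3$, $y_i=R_0^*x_i$ for all $i=1,\dots,\ell$ (no noise and no outliers), and $c_1^2,\dots,c_\ell^2\ge0$. Let $\omega^*=[w_0^*;\dots;w_0^*]\in\mathbb{R}^{4(\ell+1)}$ ($w_0^*$ repeated $\ell+1$ times). Then $\omega^*$ is a global minimizer of (QCQP) and $\omega^*(\omega^* )^\top$ globally minimizes (SDR); in particular (SDR) is tight.
   Context: For $w=[w_1;w_2;w_3;w_4]\in\mathbb{S}^3$, $R(w)=\begin{bmatrix} w_1^2+w_2^2-w_3^2-w_4^2 & 2(w_2w_3-w_1w_4) & 2(w_2w_4+w_1w_3)\\ 2(w_2w_3+w_1w_4) & w_1^2+w_3^2-w_2^2-w_4^2 & 2(w_3w_4-w_1w_2)\\ 2(w_2w_4-w_1w_3) & 2(w_3w_4+w_1w_2) & w_1^2+w_4^2-w_2^2-w_3^2\end{bmatrix}\in SO(3)$; $w$ and $-w$ are the unit quaternion representations of $R(w)$. $Q_i$ is the unique symmetric $4\times4$ matrix with $w^\top Q_iw=\|y_i-R(w)x_i\|_2^2$ for all $w\in\mathbb{S}^3$. For $\mathcal{A}\in\mathbb{R}^{4(\ell+1)\times4(\ell+1)}$, $[\mathcal{A}]_{ij}$ ($0\le i,j\le\ell$) is the $4\times4$ block in rows $4i+1..4i+4$, columns $4j+1..4j+4$. $\mathcal{Q}$ is symmetric with $[\mathcal{Q}]_{0i}=[\mathcal{Q}]_{i0}=\frac12(Q_i-c_i^2I_4)$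 ($i\ge1$), other blocks zero. (QCQP): minimize $\operatorname{tr}(\mathcal{Q}\omega\omega^\top)+\sum_ic_i^2$ over $\omega\in\mathbb{R}^{4(\ell+1)}$ s.t. $[\omega\omega^\top]_{0i}=[\omega\omega^\top]_{ii}$ ($i=1..\ell$), $\operatorname{tr}([\omega\omega^\top]_{00})=1$. (SDR): minimize $\operatorname{tr}(\mathcal{Q}\mathcal{W})+\sum_ic_i^2$ over symmetric $\mathcal{W}\succeq0$ s.t. $[\mathcal{W}]_{0i}=[\mathcal{W}]_{ii}$ ($i=1..\ell$), $\operatorname{tr}([\mathcal{W}]_{00})=1$. (SDR) is tight if it admits $\hat\omega\hat\omega^\top$ as a global minimizer, where $\hat\omega$ is a global minimizer of (QCQP). *)

(* Defs.v *)
From HB Require Import structures.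
From mathcomp Require Import all_boot all_order all_algebra.
Set Implicit Arguments. Unset Strict Implicit. Unset Printing Implicit Defensive.
Import Order.TTheory GRing.Theory Num.Theory.
Local Open Scope ring_scope.

Section Defs.
Variable R : realFieldType.

Definition sqnorm n (v : 'cV[R]_n) : R := \sum_(i < n) v i 0 ^+ 2.

Definition on_sphere n (v : 'cV[R]_n) : Prop := sqnorm v = 1.

(* quaternion components w_1..w_4 (1-based, as in the paper) *)
Definition qc (w : 'cV[R]_4) (k : nat) : R := w (inord k.-1) 0.

Definition Rq (w : 'cV[R]_4) : 'M[R]_3 :=
  let w1 := qc w 1 in let w2 := qc w 2 in let w3 := qc w 3 in let w4 := qc w 4 in
  \matrix_(i < 3, j < 3)
    match val i, val j with
    | 0, 0 => w1^+2 + w2^+2 - w3^+2 - w4^+2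
    | 0, 1 => 2 * (w2 * w3 - w1 * w4)
    | 0, _ => 2 * (w2 * w4 + w1 * w3)
    | 1, 0 => 2 * (w2 * w3 + w1 * w4)
    | 1, 1 => w1^+2 + w3^+2 - w2^+2 - w4^+2
    | 1, _ => 2 * (w3 * w4 - w1 * w2)
    | _, 0 => 2 * (w2 * w4 - w1 * w3)
    | _, 1 => 2 * (w3 * w4 + w1 * w2)
    | _, _ => w1^+2 + w4^+2 - w2^+2 - w3^+2
    end.

Lemma bidx_proof n (i : 'I_n) (a : 'I_4) : (4 * i + a < 4 * n)%N.
Proof.
have ha := ltn_ord a; have hi := ltn_ord i.
apply: (@leq_trans (4 * i + 4)%N); first by rewrite ltn_add2l.
by rewrite -mulnSr leq_mul2l.
Qed.

(* global index of entry a of block i, i.e. 4i + a (0-based) *)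
Definition bidx n (i : 'I_n) (a : 'I_4) : 'I_(4 * n) := Ordinal (bidx_proof i a).

Definition block n (A : 'M[R]_(4 * n)) (i j : 'I_n) : 'M[R]_4 :=
  \matrix_(a < 4, b < 4) A (bidx i a) (bidx j b).

(* [w; w; ...; w] (n copies) *)
Definition rep n (w : 'cV[R]_4) : 'cV[R]_(4 * n) :=
  \col_(p < 4 * n) w (Ordinal (ltn_pmod p (isT : (0 < 4)%N))) 0.

(* the matrix calQ, characterized blockwise; block index 0 is None,
   block index i >= 1 is Some (i-1) via unlift ord0 *)
Definition calQ_blocks l (Q : 'I_l -> 'M[R]_4) (c2 : 'I_l -> R)
  (I J : 'I_l.+1) : 'M[R]_4 :=
  match unlift ord0 I, unlift ord0 J with
  | None, Some j => 2^-1 *: (Q j - (c2 j)%:M)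
  | Some i, None => 2^-1 *: (Q i - (c2 i)%:M)
  | _, _ => 0
  end.

Definition is_calQ l (Q : 'I_l -> 'M[R]_4) (c2 : 'I_l -> R)
  (calQ : 'M[R]_(4 * l.+1)) : Prop :=
  forall I J : 'I_l.+1, block calQ I J = calQ_blocks Q c2 I J.

Definition obj l (calQ : 'M[R]_(4 * l.+1)) (c2 : 'I_l -> R)
  (W : 'M[R]_(4 * l.+1)) : R := \tr (calQ *m W) + \sum_(i < l) c2 i.

Definition lin_feasible l (W : 'M[R]_(4 * l.+1)) : Prop :=
  (forall i : 'I_l, block W ord0 (lift ord0 i) = block W (lift ord0 i) (lift ord0 i))
  /\ \tr (block W ord0 ord0) = 1.

Definition psd n (W : 'M[R]_n) : Prop :=
  W^T = W /\ forall v : 'cV[R]_n, 0 <= (v^T *m W *m v) 0 0.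

Definition qcqp_feasible l (om : 'cV[R]_(4 * l.+1)) : Prop :=
  lin_feasible (om *m om^T).

Definition sdr_feasible l (W : 'M[R]_(4 * l.+1)) : Prop :=
  psd W /\ lin_feasible W.

Definition qcqp_global_min l calQ c2 (om : 'cV[R]_(4 * l.+1)) : Prop :=
  qcqp_feasible om /\
  forall om', qcqp_feasible om' -> obj calQ c2 (om *m om^T) <= obj calQ c2 (om' *m om'^T).

Definition sdr_global_min l calQ c2 (W : 'M[R]_(4 * l.+1)) : Prop :=
  sdr_feasible W /\
  forall W', sdr_feasible W' -> obj calQ c2 W <= obj calQ c2 W'.

Definition sdr_tight l calQ c2 : Prop :=
  exists om : 'cV[R]_(4 * l.+1),
    qcqp_global_min calQ c2 om /\ sdr_global_min calQ c2 (om *m om^T).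

End Defs.

(* Main.v *)
Require Import Defs.
From HB Require Import structures.
From mathcomp Require Import all_boot all_order all_algebra.
From mathcomp Require Import ring lra zify.
Import Order.TTheory GRing.Theory Num.Theory.
Set Implicit Arguments. Unset Strict Implicit. Unset Printing Implicit Defensive.
Local Open Scope ring_scope.

Lemma sum_ind_r (R : pzRingType) n (F : 'I_n -> R) x :
  \sum_p F p * (p == x)%:R = F x.
Proof.
rewrite (bigD1 x) //= eqxx mulr1 big1 ?addr0 // => p /negbTE ->.
by rewrite mulr0.
Qed.

Lemma sum_ind_l (R : pzRingType) n (F : 'I_n -> R) x :
  \sum_p (p == x)%:R * F p = F x.
Proof.
rewrite (bigD1 x) //= eqxx mul1r big1 ?addr0 // => p /negbTE ->.
by rewrite mul0r.
Qed.

Lemma bidx_inj n (I J : 'I_n) a b : bidx I a = bidx J b -> I = J /\ a = b.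
Proof.
move/(congr1 val) => /= h.
have ha := ltn_ord a; have hb := ltn_ord b.
split; apply: val_inj => /=; lia.
Qed.

Lemma bidx_surj n (p : 'I_(4 * n)) : exists I a, p = bidx I a.
Proof.
have h1 : (p %/ 4 < n)%N by rewrite ltn_divLR //; have := ltn_ord p; lia.
have h2 : (p %% 4 < 4)%N by rewrite ltn_mod.
exists (Ordinal h1), (Ordinal h2); apply: val_inj => /=.
by have := divn_eq p 4; lia.
Qed.

Definition Emb (R : pzRingType) {n} (I : 'I_n) : 'M[R]_(4 * n, 4) :=
  \matrix_(p, a) ((p == bidx I a)%:R).

Lemma blockE (R : realFieldType) n (A : 'M[R]_(4 * n)) I J :
  block A I J = (Emb R I)^T *m A *m Emb R J.
Proof.
apply/matrixP => a b; rewrite !mxE.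
under eq_bigr do rewrite !mxE.
rewrite sum_ind_r.
under eq_bigr do rewrite !mxE.
by rewrite sum_ind_l.
Qed.

Lemma Emb_sum (R : realFieldType) n :
  \sum_(I < n) Emb R I *m (Emb R I)^T = (1%:M : 'M[R]_(4 * n)).
Proof.
apply/matrixP => p q.
rewrite summxE mxE.
have [I0 [a0 hp]] := bidx_surj p; subst p.
rewrite (bigD1 I0) //= big1 ?addr0; last first.
  move=> I hI; rewrite mxE big1 // => a _; rewrite !mxE.
  case: eqP => [/bidx_inj [h _]|]; last by rewrite mul0r.
  by rewrite h eqxx in hI.
rewrite mxE (bigD1 a0) //= big1 ?addr0; last first.
  move=> a ha; rewrite !mxE.
  case: eqP => [/bidx_inj [_ h]|]; last by rewrite mul0r.
  by rewrite h eqxx in ha.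
rewrite !mxE eqxx mul1r; congr (_%:R).
by rewrite eq_sym.
Qed.


Lemma sum3 (R : realFieldType) (F : 'I_3 -> R) :
  \sum_(i < 3) F i = F (inord 0) + F (inord 1) + F (inord 2).
Proof.
rewrite !big_ord_recl big_ord0 addr0 !addrA.
by congr (F _ + F _ + F _); apply: val_inj; rewrite /= inordK.
Qed.

Lemma sum4 (R : realFieldType) (F : 'I_4 -> R) :
  \sum_(i < 4) F i = F (inord 0) + F (inord 1) + F (inord 2) + F (inord 3).
Proof.
rewrite !big_ord_recl big_ord0 addr0 !addrA.
by congr (F _ + F _ + F _ + F _); apply: val_inj; rewrite /= inordK.
Qed.

Definition Lm (R : realFieldType) (x y : 'cV[R]_3) : 'M[R]_4 :=
 let d k := y (inord k) 0 - x (inord k) 0 in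
 let s k := y (inord k) 0 + x (inord k) 0 in
 \matrix_(i < 4, j < 4) match val i, val j with
 | 0,0 => 0 | 0,1 => - d 0%N | 0,2 => - d 1%N | 0,_ => - d 2%N
 | 1,0 => d 0%N | 1,1 => 0 | 1,2 => - s 2%N | 1,_ => s 1%N
 | 2,0 => d 1%N | 2,1 => s 2%N | 2,2 => 0 | 2,_ => - s 0%N
 | _,0 => d 2%N | _,1 => - s 1%N | _,2 => s 0%N | _,_ => 0 end.

Lemma Lm_key (R : realFieldType) (w : 'cV[R]_4) (x y : 'cV[R]_3) :
  sqnorm w = 1 -> sqnorm (y - Rq w *m x) = sqnorm (Lm x y *m w).
Proof.
move=> hw.
have key : sqnorm (sqnorm w *: y - Rq w *m x) = sqnorm w * sqnorm (Lm x y *m w).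
  rewrite /sqnorm /qc !(sum3, sum4, mxE) /=.
  rewrite !inordK //=.
  rewrite /qc /=.
  ring.
by rewrite hw scale1r mul1r in key.
Qed.


Lemma trdWd (R : realFieldType) n (W : 'M[R]_n) p q :
  \tr ((delta_mx 0 p : 'M[R]_(1, n)) *m W *m (delta_mx q 0 : 'M[R]_(n, 1))) = W p q.
Proof. by rewrite trace_mx11 -rowE -colE !mxE. Qed.

Lemma quad2 (R : realFieldType) n (M : 'M[R]_n) a b (al be : R) :
  \tr ((al *: delta_mx a 0 + be *: delta_mx b 0 : 'cV[R]_n)^T *m M
       *m (al *: delta_mx a 0 + be *: delta_mx b 0 : 'cV[R]_n))
  = al ^+ 2 * M a a + al * be * (M a b + M b a) + be ^+ 2 * M b b.
Proof.
rewrite !linearD !linearZ /= !trmx_delta !mulmxDl.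
rewrite -!scalemxAl !linearD !linearZ /= !trdWd; ring.
Qed.

Lemma sqnorm_tr (R : realFieldType) n (v : 'cV[R]_n) :
  sqnorm v = \tr (v^T *m v).
Proof.
rewrite trace_mx11 mxE /sqnorm; apply: eq_bigr => i _; rewrite mxE expr2 //.
Qed.

Lemma quadE (R : realFieldType) n (v : 'cV[R]_n) (M : 'M[R]_n) :
  \tr (v^T *m v) = \tr (v^T *m 1%:M *m v).
Proof. by rewrite mulmx1. Qed.

Lemma Q_unique (R : realFieldType) (Q P : 'M[R]_4) : Q^T = Q -> P^T = P ->
  (forall w : 'cV[R]_4, sqnorm w = 1 -> \tr (w^T *m Q *m w) = \tr (w^T *m P *m w)) ->
  Q = P.
Proof.
move=> hQ hP h.
have sQ a b : Q b a = Q a b by rewrite -{1}hQ mxE.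
have sP a b : P b a = P a b by rewrite -{1}hP mxE.
have hd a b (al be : R) : al ^+ 2 + al * be * ((a == b)%:R + (b == a)%:R) + be ^+ 2 = 1 ->
  al ^+ 2 * Q a a + al * be * (Q a b + Q b a) + be ^+ 2 * Q b b =
  al ^+ 2 * P a a + al * be * (P a b + P b a) + be ^+ 2 * P b b.
  move=> e; rewrite -!quad2; apply: h.
  rewrite sqnorm_tr -[_^T]mulmx1 quad2 !mxE !eqxx !mulr1n !mulr1.
  exact: e.
have diag c : Q c c = P c c.
  have := hd c c 1 0; rewrite !mulr0 expr1n expr0n /= !addr0 !mul0r !mul1r !addr0.
  by apply.
apply/matrixP => a b.
have [->|nab] := eqVneq a b; first exact: diag.
have := hd a b (3/5) (4/5).
rewrite (negbTE nab) eq_sym (negbTE nab) !addr0 mulr0 addr0 !diag (sQ a b) (sP a b).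
move=> H; have {}H := H (ltac:(field)).
lra.
Qed.


Lemma trace_blocks (R : realFieldType) n (A W : 'M[R]_(4 * n)) :
  \tr (A *m W) = \sum_I \sum_J \tr (block A I J *m block W J I).
Proof.
have -> : A *m W = A *m (\sum_(J < n) Emb R J *m (Emb R J)^T) *m W
   *m (\sum_(I < n) Emb R I *m (Emb R I)^T).
  by rewrite !Emb_sum !mulmx1.
rewrite mulmx_sumr linear_sum /=; apply: eq_bigr => I _.
rewrite mulmx_sumr !mulmx_suml linear_sum /=; apply: eq_bigr => J _.
rewrite !blockE.
rewrite !mulmxA [in LHS]mxtrace_mulC !mulmxA.
done.
Qed.


Lemma psd_tr_ge0 (R : realFieldType) (L B : 'M[R]_4) : psd B -> 0 <= \tr (L^T *m L *m B).
Proof.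
move=> [_ hB].
rewrite -mulmxA mxtrace_mulC /mxtrace; apply: sumr_ge0 => k _.
have := hB (row k L)^T; rewrite trmxK.
suff -> : (L *m B *m L^T) k k = (row k L *m B *m (row k L)^T) 0 0 by [].
rewrite !mxE; apply: eq_bigr => j _; rewrite !mxE; congr (_ * _).
by apply: eq_bigr => i _; rewrite !mxE.
Qed.

Lemma psd_diff (R : realFieldType) n (W : 'M[R]_n) p q :
  psd W -> 0 <= W p p - W p q - W q p + W q q.
Proof.
move=> [_ hW]; have := hW (delta_mx p 0 - delta_mx q 0).
rewrite -trace_mx11 !linearB /= !trmx_delta !mulmxBl !linearB /= !trdWd.
move=> h; lra.
Qed.

Lemma psd_block (R : realFieldType) n (W : 'M[R]_(4 * n)) I :
  psd W -> psd (block W I I).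
Proof.
move=> [hs hW]; rewrite blockE; split.
  by rewrite !trmx_mul trmxK hs mulmxA.
move=> v; have := hW (Emb R I *m v).
by rewrite trmx_mul !mulmxA.
Qed.


Lemma block_tr (R : realFieldType) n (W : 'M[R]_(4 * n)) I J :
  W^T = W -> block W J I = (block W I J)^T.
Proof. by move=> hs; rewrite !blockE !trmx_mul trmxK hs mulmxA. Qed.

Lemma obj_formula (R : realFieldType) l (Q : 'I_l -> 'M[R]_4) c2 calQ
  (W : 'M[R]_(4 * l.+1)) :
  is_calQ Q c2 calQ -> W^T = W -> lin_feasible W ->
  obj calQ c2 W = \sum_i (\tr (Q i *m block W (lift ord0 i) (lift ord0 i))
     + c2 i * (1 - \tr (block W (lift ord0 i) (lift ord0 i)))).
Proof.
move=> hc hs [hf _].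
set B := fun i => block W (lift ord0 i) (lift ord0 i).
have hB i : block W ord0 (lift ord0 i) = B i by rewrite hf.
have hBt i : (B i)^T = B i by rewrite /B -block_tr.
have h00 : \tr (block calQ ord0 ord0 *m block W ord0 ord0) = 0.
  by rewrite hc /calQ_blocks unlift_none mul0mx linear0.
have h0j j : \tr (block calQ ord0 (lift ord0 j) *m block W (lift ord0 j) ord0)
   = 2^-1 * \tr ((Q j - (c2 j)%:M) *m B j).
  rewrite hc /calQ_blocks unlift_none liftK (block_tr _ _ hs) hB hBt.
  by rewrite -scalemxAl linearZ.
have hi0 i : \tr (block calQ (lift ord0 i) ord0 *m block W ord0 (lift ord0 i))
   = 2^-1 * \tr ((Q i - (c2 i)%:M) *m B i).
  rewrite hc /calQ_blocks unlift_none liftK hB.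
  by rewrite -scalemxAl linearZ.
have hij i j : \tr (block calQ (lift ord0 i) (lift ord0 j) *m block W (lift ord0 j) (lift ord0 i)) = 0.
  by rewrite hc /calQ_blocks !liftK mul0mx linear0.
rewrite /obj trace_blocks big_ord_recl.
rewrite [X in X + _ + _](big_ord_recl l) h00 add0r.
rewrite (eq_bigr (fun j => 2^-1 * \tr ((Q j - (c2 j)%:M) *m B j))); last by move=> j _; exact: h0j.
rewrite [X in _ + X + _](eq_bigr (fun i => 2^-1 * \tr ((Q i - (c2 i)%:M) *m B i))); last first.
  move=> i _; rewrite (big_ord_recl l) hi0 big1 ?addr0 // => j _; exact: hij.
rewrite -!big_split /=; apply: eq_bigr => i _.
rewrite mulmxBl linearB /= mul_scalar_mx linearZ /=.
rewrite /B; lra.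
Qed.


Lemma psd_rank1 (R : realFieldType) n (om : 'cV[R]_n) : psd (om *m om^T).
Proof.
split; first by rewrite trmx_mul trmxK.
move=> v; rewrite !mulmxA -(mulmxA _ om^T) -[om^T *m v]trmxK trmx_mul trmxK.
rewrite mxE; apply: sumr_ge0 => k _; rewrite [X in _ * X]mxE -expr2; exact: sqr_ge0.
Qed.

Lemma Emb_rep (R : realFieldType) n (w0 : 'cV[R]_4) (I : 'I_n) :
  (Emb R I)^T *m rep n w0 = w0.
Proof.
apply/matrixP => a b; rewrite !mxE.
under eq_bigr do rewrite !mxE.
rewrite (eq_bigr (fun p => (p == bidx I a)%:R * rep n w0 p 0)); last first.
  by move=> p _; rewrite eq_sym mxE.
rewrite sum_ind_l mxE; rewrite (ord1 b); congr (w0 _ 0).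
apply: val_inj => /=.
have ha := ltn_ord a.
by rewrite mulnC modnMDl modn_small.
Qed.

Lemma block_rep (R : realFieldType) n (w0 : 'cV[R]_4) (I J : 'I_n) :
  block (rep n w0 *m (rep n w0)^T) I J = w0 *m w0^T.
Proof.
rewrite blockE.
have -> : (Emb R I)^T *m (rep n w0 *m (rep n w0)^T) *m Emb R J
  = ((Emb R I)^T *m rep n w0) *m ((Emb R J)^T *m rep n w0)^T.
  by rewrite trmx_mul trmxK !mulmxA.
by rewrite !Emb_rep.
Qed.

Lemma sdr_lower (R : realFieldType) (l : nat)
  (x y : 'I_l -> 'cV[R]_3) (c2 : 'I_l -> R)
  (Q : 'I_l -> 'M[R]_4) (calQ : 'M[R]_(4 * l.+1)) W :
  (forall i, 0 <= c2 i) ->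
  (forall i, (Q i)^T = Q i /\
     forall w : 'cV[R]_4, on_sphere w ->
       (w^T *m Q i *m w) 0 0 = sqnorm (y i - Rq w *m x i)) ->
  is_calQ Q c2 calQ -> sdr_feasible W -> 0 <= obj calQ c2 W.
Proof.
move=> hc hQ hcal [hpsd hlin].
have hs := hpsd.1.
rewrite (obj_formula hcal hs hlin); apply: sumr_ge0 => i _.
set B := block W (lift ord0 i) (lift ord0 i).
have hBpsd : psd B by exact: psd_block.
apply: addr_ge0.
  have -> : Q i = (Lm (x i) (y i))^T *m Lm (x i) (y i).
    apply: Q_unique; first exact: (hQ i).1.
      by rewrite trmx_mul trmxK.
    move=> w hw; rewrite trace_mx11 (hQ i).2 // Lm_key //.
    by rewrite sqnorm_tr trmx_mul !mulmxA.
  exact: psd_tr_ge0.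
apply: mulr_ge0 => //.
rewrite subr_ge0 -hlin.2 /mxtrace; apply: ler_sum => k _.
have := psd_diff (bidx ord0 k) (bidx (lift ord0 i) k) hpsd.
have e1 : W (bidx ord0 k) (bidx (lift ord0 i) k) = B k k.
  by rewrite /B -hlin.1 mxE.
have e2 : W (bidx (lift ord0 i) k) (bidx ord0 k) = B k k.
  by rewrite -e1 -{1}hs mxE.
have e3 : W (bidx (lift ord0 i) k) (bidx (lift ord0 i) k) = B k k by rewrite mxE.
have e0 : block W ord0 ord0 k k = W (bidx ord0 k) (bidx ord0 k) by rewrite mxE.
rewrite e0 e1 e2 e3 => h; lra.
Qed.


Theorem theorem3p1 (R : realFieldType) (l : nat) (w0 : 'cV[R]_4)
  (x y : 'I_l -> 'cV[R]_3) (c2 : 'I_l -> R)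
  (Q : 'I_l -> 'M[R]_4) (calQ : 'M[R]_(4 * l.+1)) :
  on_sphere w0 ->
  (forall i, y i = Rq w0 *m x i) ->
  (forall i, 0 <= c2 i) ->
  (forall i, (Q i)^T = Q i /\
     forall w : 'cV[R]_4, on_sphere w ->
       (w^T *m Q i *m w) 0 0 = sqnorm (y i - Rq w *m x i)) ->
  calQ^T = calQ ->
  is_calQ Q c2 calQ ->
  qcqp_global_min calQ c2 (rep l.+1 w0) /\
  sdr_global_min calQ c2 (rep l.+1 w0 *m (rep l.+1 w0)^T) /\
  sdr_tight calQ c2.
Proof.
move=> hw hy hc hQ hsym hcal.
have hw' : sqnorm w0 = 1 := hw.
set om := rep l.+1 w0.
have trw : \tr (w0 *m w0^T) = 1 by rewrite mxtrace_mulC -sqnorm_tr.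
have feas : sdr_feasible (om *m om^T).
  split; first exact: psd_rank1.
  split; first by move=> i; rewrite !block_rep.
  by rewrite block_rep.
have obj0 : obj calQ c2 (om *m om^T) = 0.
  rewrite (obj_formula hcal (psd_rank1 om).1 feas.2); apply: big1 => i _.
  rewrite block_rep trw subrr mulr0 addr0.
  rewrite mulmxA mxtrace_mulC mulmxA trace_mx11 (hQ i).2 // hy subrr.
  by rewrite /sqnorm big1 // => k _; rewrite mxE expr2 mulr0.
have low W : sdr_feasible W -> 0 <= obj calQ c2 W by exact: sdr_lower hc hQ hcal.
have qmin : qcqp_global_min calQ c2 om.
  split; first exact: feas.2.
  move=> om' h'; rewrite obj0; apply: low; split => //; exact: psd_rank1.
have smin : sdr_global_min calQ c2 (om *m om^T).
  by split => // W' hW'; rewrite obj0; exact: low.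
split => //; split => //; exists om; split => //.
Qed.
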